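(* Let $k\in\mathbb{Z}$. For every integer $n\ge 1$, $$2\sum_{m=1}^{n}\frac{1}{m^{k-1}}S_{1}(n,m)=G_{n}^{(k)}(1)+G_{n}^{(k)}.$$
   Context: For $k\in\mathbb{Z}$, the polyexponential function of index $k$ is $\mathrm{Ei}_k(x)=\sum_{n=1}^{\infty}\frac{x^n}{n^k(n-1)!}$. The poly-Genocchi polynomials $G_n^{(k)}(x)$ of index $k$ are defined by the generating function $\frac{2\,\mathrm{Ei}_k(\log(1+t))}{e^t+1}e^{xt}=\sum_{n=0}^{\infty}G_n^{(k)}(x)\frac{t^n}{n!}$, and $G_n^{(k)}=G_n^{(k)}(0)$. $S_1(n,m)$ denotes the (signed) Stirling numbers of the first kind, defined by $\frac{(\log(1+t))^m}{m!}=\sum_{n=m}^{\infty}S_1(n,m)\frac{t^n}{n!}$ (equivalently $x(x-1)\cdots(x-n+1)=\sum_{m=0}^{n}S_1(n,m)x^m$). *)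

(* Defs.v *)
(* Formal power series over a numFieldType R (char. 0),
   represented by their (ordinary) coefficient sequences nat -> R. *)
From HB Require Import structures.
From mathcomp Require Import all_boot all_order all_algebra.
Set Implicit Arguments. Unset Strict Implicit. Unset Printing Implicit Defensive.
Import Order.TTheory GRing.Theory Num.Theory.
Local Open Scope ring_scope.

Section FPS.
Variable R : numFieldType.

Definition fps := nat -> R.

Definition fps_mul (a b : fps) : fps :=
  fun n => \sum_(i < n.+1) a i * b (n - i)%N.

Definition fps_scale (c : R) (a : fps) : fps := fun n => c * a n.
Definition fps_add (a b : fps) : fps := fun n => a n + b n.

Definition fps_one : fps := fun n => if n == 0%N then 1 else 0.

Fixpoint fps_pow (a : fps) (m : nat) : fps :=
  if m is m'.+1 then fps_mul a (fps_pow a m') else fps_one.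

(* composition c(L(t)) = sum_m c_m L(t)^m, meaningful when L 0 = 0 *)
Definition fps_comp (c L : fps) : fps :=
  fun n => \sum_(m < n.+1) c m * fps_pow L m n.

Fixpoint fps_inv_upto (a : fps) (n : nat) : seq R :=
  if n is n'.+1 then
    let s := fps_inv_upto a n' in
    rcons s (- (a 0%N)^-1 * \sum_(i < n'.+1) a i.+1 * nth 0 s (n' - i)%N)
  else [:: (a 0%N)^-1].

Definition fps_inv (a : fps) : fps := fun n => nth 0 (fps_inv_upto a n) n.

Definition fps_exp (x : R) : fps := fun n => x ^+ n / n`!%:R.

Definition fps_log1p : fps :=
  fun n => if n == 0%N then 0 else (-1) ^+ n.-1 / n%:R.

Definition fps_Ei (k : int) : fps :=
  fun n => if n == 0%N then 0 else ((n%:R : R) ^ k * (n.-1)`!%:R)^-1.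

Definition polyGenocchi_gf (k : int) (x : R) : fps :=
  fps_mul (fps_scale 2 (fps_comp (fps_Ei k) fps_log1p))
    (fps_mul (fps_exp x) (fps_inv (fps_add (fps_exp 1) fps_one))).

Definition polyGenocchi (k : int) (n : nat) (x : R) : R :=
  n`!%:R * polyGenocchi_gf k x n.

End FPS.

Definition stirling1 (n m : nat) : int :=
  (\prod_(i < n) ('X - (i%:Z)%:P) : {poly int})`_m.

(* Main.v *)
Require Import Defs.
From HB Require Import structures.
From mathcomp Require Import all_boot all_order all_algebra.
From mathcomp Require Import ring.
Import Order.TTheory GRing.Theory Num.Theory.
Local Open Scope ring_scope.

Section S.
Variable R : numFieldType.
Implicit Types a b c : fps R.

Lemma fps_mul_congr a b b' n : (forall i, b i = b' i) -> fps_mul a b n = fps_mul a b' n.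
Proof. by move=> h; apply: eq_bigr => i _; rewrite h. Qed.

Lemma fps_mul_congl a a' b n : (forall i, a i = a' i) -> fps_mul a b n = fps_mul a' b n.
Proof. by move=> h; apply: eq_bigr => i _; rewrite h. Qed.

Lemma fps_mulDr a b c n : fps_mul a (fps_add b c) n = fps_mul a b n + fps_mul a c n.
Proof. by rewrite /fps_mul -big_split; apply: eq_bigr => i _; rewrite /fps_add mulrDr. Qed.

Lemma fps_mulDl a b c n : fps_mul (fps_add a b) c n = fps_mul a c n + fps_mul b c n.
Proof. by rewrite /fps_mul -big_split; apply: eq_bigr => i _; rewrite /fps_add mulrDl. Qed.

Lemma fps_mul1 a n : fps_mul a (@fps_one R) n = a n.
Proof.
rewrite /fps_mul big_ord_recr /= subnn /fps_one eqxx mulr1 big1 ?add0r // => i _.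
by rewrite subn_eq0 leqNgt ltn_ord /= mulr0.
Qed.

Lemma fps_one_mul a n : fps_mul (@fps_one R) a n = a n.
Proof.
rewrite /fps_mul big_ord_recl /= subn0 /fps_one eqxx mul1r big1 ?addr0 // => i _.
by rewrite /bump /= mul0r.
Qed.

Lemma size_inv_upto a n : size (fps_inv_upto a n) = n.+1.
Proof. by elim: n => //= n IH; rewrite size_rcons IH. Qed.

Lemma nth_inv_upto a n j i : (i <= n)%N ->
  nth 0 (fps_inv_upto a (n + j)) i = fps_inv a i.
Proof.
move=> le; elim: j => [|j IH].
  rewrite addn0 /fps_inv.
  elim: n le => [|n IHn]; first by rewrite leqn0 => /eqP ->.
  rewrite leq_eqVlt => /orP [/eqP -> //| lt].
  by rewrite /= nth_rcons size_inv_upto lt IHn.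
by rewrite addnS /= nth_rcons size_inv_upto ltnS (leq_trans le (leq_addr _ _)) IH.
Qed.

Lemma fps_invS a n : fps_inv a n.+1 =
  - (a 0%N)^-1 * \sum_(i < n.+1) a i.+1 * fps_inv a (n - i)%N.
Proof.
rewrite /fps_inv /= nth_rcons size_inv_upto ltnn eqxx; congr (_ * _).
apply: eq_bigr => i _; congr (_ * _).
have := @nth_inv_upto a (n - i)%N i (n - i)%N (leqnn _).
by rewrite subnK // -ltnS.
Qed.

Lemma fps_mulV a n : a 0%N != 0 -> fps_mul a (fps_inv a) n = fps_one R n.
Proof.
move=> a0; case: n => [|n].
  by rewrite /fps_mul big_ord1 /fps_inv /= mulfV.
rewrite /fps_mul big_ord_recl /= subn0 fps_invS /fps_one /=.
rewrite mulrA mulrN mulfV // mulN1r addrC.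
by apply/eqP; rewrite subr_eq0.
Qed.
Definition fD a : fps R := fun n => (n.+1)%:R * a n.+1.
Definition fX a : fps R := fun n => if n is n'.+1 then a n' else 0.
Definition fU a : fps R := fun n => a n + fX a n.

Lemma fD_mul a b n : fD (fps_mul a b) n = fps_mul (fD a) b n + fps_mul a (fD b) n.
Proof.
rewrite /fD /fps_mul mulr_sumr.
have -> : \sum_(i < n.+2) (n.+1)%:R * (a i * b (n.+1 - i)%N) =
  \sum_(i < n.+2) (i%:R * a i * b (n.+1 - i)%N) +
  \sum_(i < n.+2) (a i * ((n.+1 - i)%N%:R * b (n.+1 - i)%N)).
  rewrite -big_split; apply: eq_bigr => i _ /=.
  have := ltn_ord i; rewrite ltnS => lei.
  rewrite -{1}(subnKC lei) natrD; ring.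
congr (_ + _).
  rewrite big_ord_recl /= mul0r mul0r add0r; apply: eq_bigr => i _.
  by rewrite /bump /= add1n subSS ?mulrA.
rewrite big_ord_recr /= subnn mul0r mulr0 addr0; apply: eq_bigr => i _ /=.
by rewrite subSn // -ltnS.
Qed.

Lemma fX_mull a b n : fps_mul (fX a) b n = fX (fps_mul a b) n.
Proof.
case: n => [|n]; first by rewrite /fps_mul big_ord1 /= mul0r.
rewrite /fps_mul big_ord_recl /= mul0r add0r; apply: eq_bigr => i _.
by rewrite /bump /= add1n subSS.
Qed.

Lemma fX_mulr a b n : fps_mul a (fX b) n = fX (fps_mul a b) n.
Proof.
case: n => [|n]; first by rewrite /fps_mul big_ord1 /= mulr0.
rewrite /fps_mul big_ord_recr /= subnn mulr0 addr0; apply: eq_bigr => i _ /=.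
by rewrite subSn // -ltnS.
Qed.

Lemma fU_mull a b n : fU (fps_mul a b) n = fps_mul (fU a) b n.
Proof.
by rewrite /fU -fX_mull -fps_mulDl.
Qed.

Lemma fU_mulr a b n : fU (fps_mul a b) n = fps_mul a (fU b) n.
Proof.
by rewrite /fU -fX_mulr -fps_mulDr.
Qed.

Lemma fU_add a b n : fU (fun j => a j + b j) n = fU a n + fU b n.
Proof. rewrite /fU /fX; case: n => [|n]; rewrite ?addr0; ring. Qed.

Lemma fU_congr a b n : (forall j, a j = b j) -> fU a n = fU b n.
Proof. by move=> h; rewrite /fU /fX; case: n => [|n]; rewrite !h. Qed.

Lemma fUD_log n : fU (fD (fps_log1p R)) n = fps_one R n.
Proof.
have h j : fD (fps_log1p R) j = (-1) ^+ j.
  by rewrite /fD /fps_log1p /= mulrC mulfVK // pnatr_eq0.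
rewrite /fU /fX /fps_one; case: n => [|n]; rewrite !h /=.
  by rewrite expr0 addr0.
by rewrite exprS mulN1r addNr. Qed.

Lemma fps_pow0 m : fps_pow (fps_log1p R) m 0%N = (m == 0%N)%:R.
Proof.
case: m => [|m] //=; by rewrite /fps_mul big_ord1 /fps_log1p /= mul0r.
Qed.

Lemma fUD_pow m n : fU (fD (fps_pow (fps_log1p R) m)) n =
  m%:R * fps_pow (fps_log1p R) m.-1 n.
Proof.
set L := fps_log1p R.
elim: m n => [|m IH] n.
  by rewrite /fU /fX /fD /=; case: n => [|n]; rewrite /fps_one /= ?mulr0 ?addr0 ?mul0r.
rewrite (@fU_congr _ (fun j => fps_mul (fD L) (fps_pow L m) j + fps_mul L (fD (fps_pow L m)) j));
  last by move=> j; rewrite /= fD_mul.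
rewrite fU_add fU_mull fU_mulr.
rewrite (@fps_mul_congl _ (fps_one R)); last exact: fUD_log.
rewrite fps_one_mul (@fps_mul_congr _ _ (fun j => m%:R * fps_pow L m.-1 j)); last exact: IH.
have -> : fps_mul L (fun j => m%:R * fps_pow L m.-1 j) n = m%:R * fps_mul L (fps_pow L m.-1) n.
  by rewrite /fps_mul mulr_sumr; apply: eq_bigr => i _; rewrite mulrCA.
case: m {IH} => [|m]; first by rewrite mul0r addr0 mul1r.
by rewrite /= [in RHS]mulrSr mulrDl mul1r addrC.
Qed.

Lemma pow_rec m n : (n.+1)%:R * fps_pow (fps_log1p R) m n.+1 + n%:R * fps_pow (fps_log1p R) m n
  = m%:R * fps_pow (fps_log1p R) m.-1 n.
Proof.
rewrite -fUD_pow /fU /fX /fD; case: n => [|n] //=; by rewrite mul0r addr0.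
Qed.
End S.

Lemma stir0m m : stirling1 0 m = (m == 0%N)%:R.
Proof. by rewrite /stirling1 big_ord0 coef1. Qed.

Lemma stirS0 n : stirling1 n.+1 0 = 0.
Proof. by rewrite /stirling1 big_ord_recl /= subr0 coefXM. Qed.

Lemma stirSS n m : stirling1 n.+1 m.+1 = stirling1 n m - n%:Z * stirling1 n m.+1.
Proof.
rewrite /stirling1 big_ord_recr /= mulrBr coefB coefMX coefMC /=.

by rewrite mulrC. Qed.

Lemma main_stir (R : numFieldType) n m :
  n`!%:R * fps_pow (fps_log1p R) m n = m`!%:R * (stirling1 n m)%:~R.
Proof.
elim: n m => [|n IH] m.
  by rewrite fps_pow0 stir0m mul1r; case: m => [|m] /=; rewrite ?mul1r ?mulr0.
case: m => [|m].
  by rewrite stirS0 mulr0 /= /fps_one /= mulr0.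
have := pow_rec R m.+1 n.
set P := fps_pow (fps_log1p R) => h.
have e : (n.+1)%:R * P m.+1 n.+1 = m.+1%:R * P m n - n%:R * P m.+1 n.
  by rewrite -h addrK.
rewrite factS natrM mulrAC e.
have -> : (m.+1%:R * P m n - n%:R * P m.+1 n) * n`!%:R =
  m.+1%:R * (n`!%:R * P m n) - n%:R * (n`!%:R * P m.+1 n) by ring.
rewrite !IH stirSS factS natrM rmorphB rmorphM /=.
ring.
Qed.

Lemma fps_exp0 (R : numFieldType) j : fps_exp (0 : R) j = fps_one R j.
Proof. by rewrite /fps_exp /fps_one; case: j => [|j] /=; rewrite ?expr0 ?divr1 // expr0n mul0r. Qed.

Theorem theorem1 (R : numFieldType) (k : int) (n : nat) (hn : (1 <= n)%N) :
  2 * \sum_(1 <= m < n.+1) ((m%:R : R) ^ (k - 1))^-1 * (stirling1 n m)%:~R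
  = polyGenocchi k n (1 : R) + polyGenocchi k n (0 : R).
Proof.
rewrite /polyGenocchi /polyGenocchi_gf -mulrDr -fps_mulDr.
set A := fps_scale 2 _.
set I := fps_inv _.
rewrite (@fps_mul_congr _ _ _ (fps_one R)); last first.
  move=> i; rewrite /fps_add -fps_mulDl (@fps_mul_congl _ _ (fps_add (fps_exp 1) (fps_one R))).
    apply: fps_mulV; rewrite /fps_add /fps_exp /fps_one /= expr0 divr1.
    by rewrite (_ : 1 + 1 = 2%:R :> R) // pnatr_eq0.
  by move=> j; rewrite /fps_add fps_exp0.
rewrite fps_mul1 /A /fps_scale /fps_comp mulrCA; congr (2 * _).
rewrite big_ord_recl /= {1}/fps_Ei /= mul0r add0r mulr_sumr big_add1 /= big_mkord.
apply: eq_bigr => i _.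
rewrite /bump add0n /= (_ : fps_mul _ _ n = fps_pow (fps_log1p R) i.+1 n) // mulrCA main_stir /fps_Ei /= factS natrM.
have h1 : (i.+1%:R : R) ^ (k - 1) != 0 by rewrite expfz_eq0 pnatr_eq0 andbF.
have h2 : (i`!%:R : R) != 0 by rewrite pnatr_eq0 -lt0n fact_gt0.
have h3 : (i.+1%:R : R) != 0 by rewrite pnatr_eq0.
have hk : (i.+1%:R : R) ^ k = (i.+1%:R) ^ (k - 1) * i.+1%:R.
  by rewrite -{1}(subrK 1 k) expfzDr // expr1z.
rewrite add1n add0n hk.
field.
by rewrite h1 h2 (_ : 1 + i%:R = i.+1%:R :> R) ?h3 // -natr1 addrC.
Qed.
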